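(* Let $m\ge1$ be an integer and let $\alpha(m,3)$ denote the independence number of ${\rm SR}(m,3)$. Then $\alpha(m,3)=\frac16(m+1)(m+2)$ if $m\equiv\pm1\pmod 6$; $\alpha(m,3)=\frac16 m(m+3)$ if $m\equiv 3\pmod 6$; $\alpha(m,3)=\frac16 m(m+2)$ if $m\equiv 0,4\pmod 6$; $\alpha(m,3)=\frac16(m^2+2m-2)$ if $m\equiv 2\pmod 6$.
   Context: ${\rm SR}(m,n)$ is the graph whose vertices are the vectors in $\{0,1,2,\dots\}^m$ with coordinate sum $n$, two vertices being adjacent when they differ in precisely two coordinate positions. The independence number is the largest size of a set of pairwise nonadjacent vertices. *)

(* Defs.v *)
From mathcomp Require Import all_boot all_order.
Set Implicit Arguments. Unset Strict Implicit. Unset Printing Implicit Defensive.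

(* Vertices of SR(m,n): vectors in {0,1,2,...}^m with coordinate sum n.
   Each coordinate is at most n, so we use 'I_n.+1 as coordinate type;
   this loses no vectors. *)
Definition SRvert (m n : nat) : {set {ffun 'I_m -> 'I_n.+1}} :=
  [set x : {ffun 'I_m -> 'I_n.+1} | (\sum_(i < m) (x i : nat)) == n].

Definition SRadj (m n : nat) (x y : {ffun 'I_m -> 'I_n.+1}) : bool :=
  #|[set i | x i != y i]| == 2.

Definition SRindependent (m n : nat) (S : {set {ffun 'I_m -> 'I_n.+1}}) : bool :=
  (S \subset SRvert m n) &&
  [forall x in S, forall y in S, ~~ SRadj x y].

Definition SRalpha (m n : nat) : nat :=
  \max_(S : {set {ffun 'I_m -> 'I_n.+1}} | SRindependent S) #|S|.

(* Main.v *)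
Require Import Defs.
From mathcomp Require Import all_boot zify.
Set Implicit Arguments. Unset Strict Implicit. Unset Printing Implicit Defensive.

Lemma sum_pred1 (T : finType) (a : T) (f : T -> nat) :
  \sum_(x : T) f x * (x == a) = f a.
Proof.
rewrite (bigD1 a) //= eqxx muln1 big1 ?addn0 // => x /negbTE ->; by rewrite muln0.
Qed.

Lemma conc1 m (f : 'I_m -> nat) : \sum_k f k = 1 -> exists a, forall k, k != a -> f k = 0.
Proof.
move=> H.
have [a Ha] : exists a, 0 < f a.
  case: (pickP (fun a => 0 < f a)) => [a /= Ha|Hn]; first by exists a.
  move: H; rewrite big1 // => k _; move: (Hn k); by case: (f k).
exists a => k hk.
move: H; rewrite (bigD1 a) //= => H.
move: H; set s := (\sum_(i < m | _) _) => H. have H0 : s = 0 by clear -H Ha; lia. rewrite /s in H0.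
move/eqP: H0; rewrite sum_nat_eq0 => /forallP /(_ k); rewrite hk /=; by move/eqP.
Qed.

Lemma single m (f : 'I_m -> nat) a : f a = \sum_k f k -> forall k, k != a -> f k = 0.
Proof.
rewrite (bigD1 a) //= => H k hk.
move: H; set s := (\sum_(i < m | _) _) => H. have H0 : s = 0 by clear -H; lia. rewrite /s in H0.
move/eqP: H0; rewrite sum_nat_eq0 => /forallP /(_ k); rewrite hk /=; by move/eqP.
Qed.

Lemma sum_subn m (f g : 'I_m -> nat) : (forall k, g k <= f k) ->
  \sum_k (f k - g k) = \sum_k f k - \sum_k g k.
Proof.
move=> H; have E : \sum_k (f k - g k) + \sum_k g k = \sum_k f k.
  rewrite -big_split; apply: eq_bigr => k _ /=; by rewrite subnK.
lia.
Qed.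

Lemma le_sum_eq m (f g : 'I_m -> nat) : (forall k, g k <= f k) ->
  \sum_k f k = \sum_k g k -> forall k, f k = g k.
Proof.
move=> H E k.
have : \sum_k (f k - g k) == 0 by rewrite sum_subn // E subnn.
rewrite sum_nat_eq0 => /forallP /(_ k) /= /eqP; move: (H k); lia.
Qed.

Lemma split2 m (f : 'I_m -> nat) a b : a != b ->
  \sum_k f k = f a + (f b + \sum_(k | (k != a) && (k != b)) f k).
Proof. move=> ab; rewrite (bigD1 a) //= (bigD1 b) //=; last by rewrite eq_sym. Qed.

Lemma sum_ind (T : finType) (a : T) : \sum_(x : T) ((x == a) : nat) = 1.
Proof. by rewrite -(sum_pred1 a (fun _ => 1)); apply: eq_bigr => x _; rewrite mul1n. Qed.

Lemma term_le m (f : 'I_m -> nat) j : f j <= \sum_k f k.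
Proof. by rewrite (bigD1 j) //= leq_addr. Qed.

Lemma two_terms m (f : 'I_m -> nat) j k : j != k -> 0 < f j -> 0 < f k -> 2 <= \sum_i f i.
Proof.
move=> jk hj hk; rewrite (bigD1 j) //= (bigD1 k) /=; last by rewrite eq_sym.
move: hj hk; set t := (\sum_(i < m | _) _); clear; lia.
Qed.

Lemma sum_le1 (T : finType) (S : {set T}) (Q : pred T) :
  (forall x y, x \in S -> y \in S -> Q x -> Q y -> x = y) ->
  \sum_(x in S) (Q x : nat) <= 1.
Proof.
move=> H; case: (pickP (fun x => (x \in S) && Q x)) => [x0 /= /andP[x0S Qx0]|Hn].
  apply: (@leq_trans (\sum_(x : T) ((x == x0) : nat))); last by rewrite sum_ind.
  rewrite big_mkcond /=; apply: leq_sum => x _.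
  case xS: (x \in S) => //; case Qx: (Q x) => //.
  by rewrite (H x x0) // eqxx.
rewrite big1 // => x xS; move: (Hn x); rewrite xS /=; by move ->.
Qed.

Section G.
Variable m : nat.
Notation V := {ffun 'I_m -> 'I_4}.

Lemma vertE (x : V) : x \in SRvert m 3 -> \sum_k (x k : nat) = 3.
Proof. by rewrite inE => /eqP. Qed.

Lemma ADJ (x y : V) a b : x \in SRvert m 3 -> y \in SRvert m 3 -> x != y ->
  (forall k, k != a -> k != b -> (x k : nat) = y k) -> SRadj x y.
Proof.
move=> /vertE hx /vertE hy nxy H; rewrite /SRadj.
set D := [set i | x i != y i].
have sub : D \subset [set a; b].
  apply/subsetP => k; rewrite !inE => nk.
  apply/negPn/negP; rewrite negb_or => /andP[ka kb].
  move: nk; by rewrite -(inj_eq val_inj) /= H // eqxx.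
have le2 : #|D| <= 2.
  apply: leq_trans (subset_leq_card sub) _; rewrite cards2; by case: (a != b).
have ge1 : 0 < #|D|.
  rewrite card_gt0; apply/set0Pn.
  have [k hk] : exists k, x k != y k.
    apply/existsP; apply: contraR nxy => /existsPn Hn; apply/eqP/ffunP => k.
    by move: (Hn k); rewrite negbK => /eqP.
  exists k; by rewrite inE.
have ne1 : #|D| != 1.
  apply/negP => /cards1P [k0 Dk].
  have E : forall k, k != k0 -> (x k : nat) = y k.
    move=> k hk; apply/eqP; rewrite (inj_eq val_inj).
    apply/negPn/negP => nk; have : k \in D by rewrite inE.
    by rewrite Dk inE (negbTE hk).
  have : k0 \in D by rewrite Dk inE.
  rewrite inE => /negP; apply.
  rewrite (bigD1 k0) //= in hx; rewrite (bigD1 k0) //= in hy.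
  rewrite (eq_bigr (fun k => (y k : nat))) in hx; last by move=> k /E.
  have : (x k0 : nat) = y k0.
    move: hx hy; set t := (\sum_(i < m | _) _); clear; lia.
  by move=> h; apply/eqP/val_inj.
apply/eqP; move: le2 ge1 ne1; lia.
Qed.

Variable S : {set V}.
Hypothesis hS : SRindependent S.

Lemma Svert x : x \in S -> x \in SRvert m 3.
Proof. move: hS => /andP[/subsetP H _]; exact: H. Qed.

Lemma IND (x y : V) a b : x \in S -> y \in S ->
  (forall k, k != a -> k != b -> (x k : nat) = y k) -> x = y.
Proof.
move=> xS yS H; apply/eqP/negPn/negP => nxy.
have := ADJ (Svert xS) (Svert yS) nxy H.
move: hS => /andP[_ /forallP /(_ x) /implyP /(_ xS) /forallP /(_ y) /implyP /(_ yS)].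
by move/negbTE ->.
Qed.

Lemma IND2 (x y : V) (z : 'I_m -> nat) a b : x \in S -> y \in S ->
  (forall k, k != a -> (x k : nat) = z k) -> (forall k, k != b -> (y k : nat) = z k) -> x = y.
Proof.
move=> xS yS hx hy; apply: (IND (a:=a) (b:=b)) => // k ka kb.
by rewrite hx // hy.
Qed.

Lemma resid (x : V) (z : 'I_m -> nat) : x \in SRvert m 3 -> (forall k, z k <= x k) ->
  \sum_k z k = 2 -> exists a, forall k, k != a -> (x k : nat) = z k.
Proof.
move=> /vertE hx hz hs.
have [a Ha] : exists a, forall k, k != a -> (x k : nat) - z k = 0.
  apply: conc1; rewrite (sum_subn (f := fun k => (x k : nat))) // hx hs //.
exists a => k /Ha; move: (hz k); lia.
Qed.


Definition N i := \sum_(x in S) (x i : nat).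
Definition ci i (x : V) := \sum_(j : 'I_m) (((j != i) && (0 < x j) && (0 < x i)) : nat).
Definition Pi i (x : V) := (((x i : nat) == 1) && (ci i x <= 1)) || ((x i : nat) == 3).
Definition Di i := \sum_(x in S) (((x i : nat) == 3) : nat).

Lemma exists_other (x : V) i : x \in SRvert m 3 -> (x i : nat) < 3 ->
  exists j, (j != i) && (0 < x j).
Proof.
move=> /vertE hx hi.
case: (pickP (fun j => (j != i) && (0 < x j))) => [j /= Hj|Hn]; first by exists j.
move: hx; rewrite (bigD1 i) //= big1; first by move: hi; clear; lia.
move=> j ji; move: (Hn j); rewrite ji /=; by case: (x j : nat).
Qed.

Lemma ci_ge1 (x : V) i : x \in SRvert m 3 -> 0 < x i -> (x i : nat) < 3 -> 1 <= ci i x.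
Proof.
move=> xv h1 h3; have [j /andP[ji hj]] := exists_other xv h3.
apply: leq_trans (term_le _ j); by rewrite ji hj h1.
Qed.

Lemma perx (x : V) i : x \in SRvert m 3 ->
  2 * x i <= ci i x + Pi i x + (1 < x i) * 3 + ((x i : nat) == 3) * 2.
Proof.
move=> xv; have hv := ltn_ord (x i); rewrite /Pi.
have hc : 0 < x i -> (x i : nat) < 3 -> 1 <= ci i x by apply: ci_ge1.
move: hv hc; case: (x i : nat) => [|[|[|[|v]]]] //= _ hc;
  try have := hc isT isT; case: (ci i x) => [|[|c]] //= *; lia.
Qed.

Lemma pairL (x y : V) i j : i != j -> x \in S -> y \in S -> 0 < x i -> 0 < x j ->
  0 < y i -> 0 < y j -> x = y.
Proof.
move=> ij xS yS xi xj yi yj.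
pose z := fun k : 'I_m => ((k == i) : nat) + ((k == j) : nat).
have sz : \sum_k z k = 2 by rewrite big_split /= !sum_ind.
have zle : forall w : V, 0 < w i -> 0 < w j -> forall k, z k <= w k.
  move=> w wi wj k; rewrite /z; case: (eqVneq k i) => [->|ki].
    by rewrite (negbTE ij).
  case: (eqVneq k j) => [->|kj] //.
have [a Ha] := resid (Svert xS) (zle x xi xj) sz.
have [b Hb] := resid (Svert yS) (zle y yi yj) sz.
exact: IND2 xS yS Ha Hb.
Qed.

Lemma loopL (x y : V) i : x \in S -> y \in S -> 1 < x i -> 1 < y i -> x = y.
Proof.
move=> xS yS xi yi.
pose z := fun k : 'I_m => 2 * ((k == i) : nat).
have sz : \sum_k z k = 2 by rewrite -big_distrr /= sum_ind.
have zle : forall w : V, 1 < w i -> forall k, z k <= w k.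
  move=> w wi k; rewrite /z; case: (eqVneq k i) => [->|ki] //.
have [a Ha] := resid (Svert xS) (zle x xi) sz.
have [b Hb] := resid (Svert yS) (zle y yi) sz.
exact: IND2 xS yS Ha Hb.
Qed.

Lemma PiL (x : V) i : x \in SRvert m 3 -> Pi i x ->
  exists a, forall k, k != a -> (x k : nat) = ((k == i) : nat).
Proof.
move=> xv; rewrite /Pi => /orP[/andP[/eqP x1 c1]|/eqP x3].
  have [j0 /andP[j0i hj0]] : exists j, (j != i) && (0 < x j).
    apply: exists_other => //; by rewrite x1.
  exists j0 => k kj0; case: (eqVneq k i) => [->|ki] //=.
  apply/eqP; rewrite -leqn0 leqNgt; apply/negP => hk.
  have : 2 <= ci i x.
    apply: (two_terms (j := j0) (k := k)); first by rewrite eq_sym.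
      by rewrite j0i hj0 x1.
    by rewrite ki hk x1.
  by move: c1; clear; lia.
exists i => k ki; rewrite (negbTE ki) /=.
apply: (single (f := fun k => (x k : nat)) (a := i)) => //.
by rewrite (vertE xv) x3.
Qed.

Lemma three_agree (x : V) i : x \in SRvert m 3 -> (x i : nat) = 3 ->
  forall k, k != i -> (x k : nat) = 0.
Proof.
move=> xv x3; apply: (single (f := fun k => (x k : nat))).
by rewrite (vertE xv) x3.
Qed.

Lemma sum_ci i : \sum_(x in S) ci i x <= m - 1.
Proof.
rewrite /ci exchange_big /=.
apply: (@leq_trans (\sum_(j : 'I_m) ((j != i) : nat))).
  apply: leq_sum => j _; case: (eqVneq j i) => [->|ji] /=.
    by rewrite big1 // => x _; rewrite eqxx.
  apply: sum_le1 => x y xS yS /andP[hx1 hx2] /andP[hy1 hy2].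
  apply: (pairL (i := i) (j := j)) => //; by rewrite eq_sym ji.
have E : \sum_(j : 'I_m) ((j != i) : nat) + \sum_(j : 'I_m) ((j == i) : nat) = m.
  rewrite -big_split /= -[m in _ = m]card_ord -sum1_card.
  by apply: eq_bigr => j _; case: (j == i).
by move: E; rewrite sum_ind; clear; lia.
Qed.

Lemma Nbound i : 2 * N i <= m + 3 + 2 * Di i.
Proof.
have m1 : 0 < m := leq_ltn_trans (leq0n i) (ltn_ord i).
rewrite /N big_distrr /=.
apply: (@leq_trans (\sum_(x in S) (ci i x + Pi i x + (1 < x i) * 3 + ((x i : nat) == 3) * 2))).
  apply: leq_sum => x xS; exact: perx (Svert xS).
rewrite !big_split -!big_distrl /= -/(Di i).
have h1 := sum_ci i.
have h2 : \sum_(x in S) (Pi i x : nat) <= 1.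
  apply: sum_le1 => x y xS yS px py.
  have [a Ha] := PiL (Svert xS) px; have [b Hb] := PiL (Svert yS) py.
  exact: IND2 xS yS Ha Hb.
have h3 : \sum_(x in S) ((1 < x i) : nat) <= 1.
  apply: sum_le1 => x y xS yS px py; exact: loopL xS yS px py.
set A1 := \sum_(x in S) ci i x; set A2 := \sum_(x in S) (Pi i x : nat); set A3 := \sum_(x in S) ((1 < x i) : nat).
have g1 : A1 <= m - 1 := h1. have g2 : A2 <= 1 := h2. have g3 : A3 <= 1 := h3.
move: g1 g2 g3 m1; clear; lia.
Qed.

Lemma Dsum : \sum_i Di i <= 1.
Proof.
rewrite /Di exchange_big /=.
apply: (@leq_trans (\sum_(x in S) ([exists i, (x i : nat) == 3] : nat))).
  apply: leq_sum => x xS.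
  case: (pickP (fun i => (x i : nat) == 3)) => [i0 /= /eqP h0|Hn].
    rewrite (bigD1 i0) //= h0 eqxx big1 => [|k k0]; last by rewrite (three_agree (Svert xS) h0 k0).
    have -> : [exists i, (x i : nat) == 3] by apply/existsP; exists i0; rewrite h0.
    by [].
  by rewrite big1 // => k _; rewrite Hn.
apply: sum_le1 => x y xS yS /existsP[i /eqP hi] /existsP[j /eqP hj].
apply: (IND2 (z := fun _ => 0) (a := i) (b := j)) => //.
  exact: three_agree (Svert xS) hi.
exact: three_agree (Svert yS) hj.
Qed.

Lemma sumN : \sum_i N i = 3 * #|S|.
Proof.
rewrite /N exchange_big /= -sum1_card big_distrr /=.
by apply: eq_bigr => x xS; rewrite muln1 (vertE (Svert xS)).
Qed.

Lemma UBgen c : (forall i, 2 * N i <= c + 2 * Di i) -> 6 * #|S| <= m * c + 2.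
Proof.
move=> H.
have : \sum_i 2 * N i <= \sum_i (c + 2 * Di i) by apply: leq_sum => i _; exact: H.
rewrite -[X in X <= _]big_distrr /= sumN big_split -big_distrr /= sum_nat_const card_ord.
set X := \sum_(i < m) Di i; have D1 : X <= 1 := Dsum. move: D1; clear; lia.
Qed.

Lemma UB : 6 * #|S| <= m * (m + 3) + 2.
Proof. apply: UBgen => i; exact: Nbound. Qed.

Lemma UBeven : ~~ odd m -> 6 * #|S| <= m * (m + 2) + 2.
Proof.
move=> ho; apply: UBgen => i; have := Nbound i.
have := odd_double_half m; rewrite (negbTE ho) add0n -muln2.
clear; lia.
Qed.

End G.

Lemma mod_cancel d n a b : coprime d n -> a < n -> b < n ->
  (a * d) %% n = (b * d) %% n -> a = b.
Proof.
wlog ab : a b / a <= b.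
  move=> H cd an bn E; case: (leqP a b) => h; first exact: H.
  symmetry; apply: H => //; exact: ltnW.
move=> cd an bn E.
have : n %| (b - a) * d.
  rewrite mulnBl -eqn_mod_dvd ?leq_mul2r ?ab ?orbT // E.
  done.
rewrite Gauss_dvdl; last by rewrite coprime_sym.
case: (posnP (b - a)) => [h0|hp] hd; first by move: ab h0; clear; lia.
have := dvdn_leq hp hd; move: bn; clear; lia.
Qed.

Lemma cnt0 (M N s a k : nat) : M = N -> 0 < N -> s < N -> coprime a N ->
  \sum_(i < M) (((a * i + k) %% N == s) : nat) = 1.
Proof.
move=> -> N0 sN ca.
pose g := fun i : 'I_N => Ordinal (ltn_pmod (a * i + k) N0).
have inj : injective g.
  move=> i1 i2 /(congr1 val) /= /eqP; rewrite eqn_modDr => /eqP E.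
  apply: val_inj; apply: (mod_cancel (a := nat_of_ord i1) (b := nat_of_ord i2) ca) => //; by rewrite mulnC E mulnC.
transitivity (\sum_(i : 'I_N) (((i : nat) == s) : nat)).
  by rewrite [RHS](reindex_inj inj) /=.
rewrite (eq_bigr (fun i => (i == Ordinal sN) : nat)) ?sum_ind //.
Qed.

Section Low.
Variables m n s : nat.
Hypothesis hmn : m <= n.
Hypothesis hnm : n <= m.+1.
Hypothesis hodd : odd n.
Hypothesis hs : s < n.
Hypothesis h3 : coprime 3 n \/ (3 %| n /\ s = 1).
Notation V := {ffun 'I_m -> 'I_4}.

Definition W (x : V) := \sum_(k : 'I_m) (k : nat) * (x k : nat).
Definition S0 : {set V} := [set x | (x \in SRvert m 3) && (W x %% n == s)].

Lemma single3 (x : V) a : x \in SRvert m 3 -> (x a : nat) = 3 -> forall k, k != a -> (x k : nat) = 0.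
Proof.
move=> xv x3; apply: (single (f := fun k : 'I_m => (x k : nat))).
by rewrite (vertE xv) x3.
Qed.

Lemma core (x y : V) a b : x \in S0 -> y \in S0 -> a != b ->
  (forall k, k != a -> k != b -> (x k : nat) = y k) -> (y a : nat) < x a -> False.
Proof.
rewrite !inE => /andP[/eqP hx wx] /andP[/eqP hy wy] ab H lt.
have xv : x \in SRvert m 3 by rewrite inE hx.
rewrite (split2 _ ab) in hx; rewrite (split2 _ ab) in hy.
have R1 : \sum_(k | (k != a) && (k != b)) (x k : nat) = \sum_(k | (k != a) && (k != b)) (y k : nat).
  by apply: eq_bigr => k /andP[ka kb]; rewrite H.
have R2 : \sum_(k | (k != a) && (k != b)) ((k : nat) * x k) = \sum_(k | (k != a) && (k != b)) ((k : nat) * y k).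
  by apply: eq_bigr => k /andP[ka kb]; rewrite H.
move: wx wy; rewrite /W (split2 _ ab) (split2 (fun k : 'I_m => (k : nat) * y k) ab) /= R2.
set R := \sum_(k < m | _) _.
set d := (x a : nat) - y a.
have xa : (x a : nat) = y a + d by rewrite /d; move: lt; clear; lia.
have yb : (y b : nat) = x b + d by move: hx hy R1 xa; set t := (\sum_(k < m | _) _); set u := (\sum_(k < m | _) _); clear; lia.
have E : a * y a + (b * y b + R) + a * d = a * x a + (b * x b + R) + b * d.
  rewrite xa yb; clear; lia.
move=> wx wy.
have F : forall u v z, u %% n = v %% n -> (u + z) %% n = (v + z) %% n.
  by move=> u v z h; rewrite -modnDml h modnDml.
have E2 : (a * d) %% n = (b * d) %% n.
  apply/eqP; rewrite -(eqn_modDl (a * y a + (b * y b + R))) E.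
  by rewrite (F _ (a * y a + (b * y b + R))) // (eqP wx) (eqP wy).
have d1 : 0 < d by rewrite /d; move: lt; clear; lia.
have d3 : d <= 3 by rewrite /d; have := ltn_ord (x a); clear; lia.
have an : a < n := leq_trans (ltn_ord a) hmn.
have bn : b < n := leq_trans (ltn_ord b) hmn.
have nab : (a : nat) <> b by move=> h; move: ab; rewrite -(inj_eq val_inj) /= h eqxx.
have cop : forall e, coprime e n -> (a * e) %% n = (b * e) %% n -> False.
  by move=> e ce he; apply: nab; apply: (mod_cancel ce an bn he).
have : d = 1 \/ d = 2 \/ d = 3 by move: d1 d3; clear; lia.
case=> [d_1|[d_2|d_3]]; move: E2.
- rewrite d_1; exact: cop (coprime1n n).
- by rewrite d_2; apply: cop; rewrite coprime2n.
rewrite d_3; case: h3 => [c3|[dv s1]]; first exact: cop.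
move=> _.
have xa3 : (x a : nat) = 3 by move: xa d_3 (ltn_ord (x a)); clear; lia.
have z := single3 xv xa3.
have R0 : R = 0.
  rewrite /R big1 // => k /andP[ka kb]; by rewrite -H // z // muln0.
move: wx; rewrite R0 (z b) 1?eq_sym // muln0 addn0 addn0 xa3 => /eqP w3.
have := modn_dvdm (a * 3) dv; rewrite -w3 s1 modnMl.
by [].
Qed.

Lemma S0_indep : SRindependent S0.
Proof.
apply/andP; split.
  by apply/subsetP => x; rewrite in_set => /andP[].
apply/forallP => x; apply/implyP => xS; apply/forallP => y; apply/implyP => yS.
apply/negP => /cards2P [a [b [ab HD]]].
have H : forall k, k != a -> k != b -> (x k : nat) = y k.
  move=> k ka kb.
  have : k \notin [set i | x i != y i] by rewrite HD !inE negb_or ka kb.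
  by rewrite inE negbK => /eqP ->.
have : a \in [set i | x i != y i] by rewrite HD !inE eqxx.
rewrite inE => xya.
case: (ltngtP (y a) (x a)) => [lt|lt|eq].
- exact: core xS yS ab H lt.
- by apply: (core yS xS ab _ lt) => k ka kb; rewrite H.
- by move: xya; rewrite -(inj_eq val_inj) /= eq eqxx.
Qed.

Definition vv (i j c : 'I_m) : V := [ffun k => inord ((k == i) + (k == j) + (k == c))].

Lemma vvE i j c k : (vv i j c k : nat) = (k == i) + (k == j) + (k == c).
Proof. by rewrite ffunE inordK //; case: (k == i); case: (k == j); case: (k == c). Qed.

Lemma sum3 (f : 'I_m -> nat) i j c :
  \sum_k f k * ((k == i) + (k == j) + (k == c)) = f i + f j + f c.
Proof.
rewrite (eq_bigr (fun k => f k * (k == i) + f k * (k == j) + f k * (k == c))); last first.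
  by move=> k _; rewrite !mulnDr.
by rewrite !big_split /= !sum_pred1.
Qed.

Lemma vv_vert i j c : vv i j c \in SRvert m 3.
Proof.
rewrite inE (eq_bigr (fun k => 1 * ((k == i) + (k == j) + (k == c)))).
  by rewrite sum3.
by move=> k _; rewrite vvE mul1n.
Qed.

Lemma vv_S0 i j c : (vv i j c \in S0) = ((i + j + c) %% n == s).
Proof.
rewrite in_set vv_vert /= /W (eq_bigr (fun k : 'I_m => (k : nat) * ((k == i) + (k == j) + (k == c)))).
  by rewrite sum3.
by move=> k _; rewrite vvE.
Qed.

Definition Fw (i j c : 'I_m) (x : V) : nat :=
  x i * (x j - (j == i)) * (x c - (c == i) - (c == j)).

Lemma Fw_vv i j c : Fw i j c (vv i j c) = (1 + (i == j) + (c == i)) * (1 + (c == j)).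
Proof.
rewrite /Fw !vvE !eqxx (eq_sym j i) (eq_sym i c) (eq_sym j c).
by case: (i == j); case: (c == i); case: (c == j).
Qed.

Lemma Fw_supp (x : V) i j c : x \in SRvert m 3 ->
  Fw i j c x = (x == vv i j c) * Fw i j c (vv i j c).
Proof.
move=> xv; case: (eqVneq x (vv i j c)) => [->|nx]; first by rewrite mul1n.
rewrite mul0n; apply/eqP; apply: contraR nx; rewrite /Fw -!lt0n !muln_gt0 => /andP[/andP[hi hj] hc].
have le : forall k, (vv i j c k : nat) <= x k.
  move=> k; rewrite vvE.
  case: (eqVneq k c) => [->|kc].
    by move: hc; case: (c == i); case: (c == j); clear; lia.
  case: (eqVneq k j) => [->|kj].
    by move: hj kc; case: (j == i); case: (j == c); clear; lia.
  case: (eqVneq k i) => [->|ki] //; by move: hi; clear; lia.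
have := le_sum_eq (f := fun k => (x k : nat)) (g := fun k => (vv i j c k : nat)) le.
rewrite (vertE xv) (vertE (vv_vert i j c)) => /(_ erefl) E.
by apply/eqP/ffunP => k; apply/val_inj; rewrite /= E.
Qed.

Lemma Fw_sum (x : V) : x \in SRvert m 3 -> \sum_i \sum_j \sum_c Fw i j c x = 6.
Proof.
move=> xv; have hx := vertE xv.
have inner : forall i j, \sum_c Fw i j c x = x i * (x j - (j == i)).
  move=> i j; rewrite /Fw -big_distrr /=.
  case: (posnP (x i * (x j - (j == i)))) => [->|hp]; first by rewrite mul0n.
  move: (hp); rewrite muln_gt0 => /andP[hi hj].
  have -> : \sum_c (x c - (c == i) - (c == j)) = 1; last by rewrite muln1.
  rewrite (eq_bigr (fun c => (x c : nat) - ((c == i) + (c == j)))); last by move=> c _; rewrite subnDA.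
  rewrite (sum_subn (f := fun c => (x c : nat))) ?hx.
    by rewrite big_split /= !sum_ind.
  move=> c; case: (eqVneq c i) => [->|ci].
    case: (eqVneq i j) => [eij|ij] /=; last by [].
    by move: hj; rewrite -eij eqxx; clear; lia.
  case: (eqVneq c j) => [ecj|cj] //.
  by move: hj; rewrite -ecj (negbTE ci); clear; lia.
under eq_bigr => i _ do under eq_bigr => j _ do rewrite inner.
rewrite (eq_bigr (fun i => (x i : nat) * 2)).
  by rewrite -big_distrl /= hx.
move=> i _; rewrite -big_distrr /=.
case: (posnP (x i : nat)) => [->|hi]; first by rewrite !mul0n.
congr (_ * _).
rewrite (sum_subn (f := fun j => (x j : nat))) ?hx ?sum_ind //.
move=> j; case: (eqVneq j i) => [->|ji] //.
Qed.

Definition t k := ((k %% n == s) : nat).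

Lemma count6 : 6 * #|S0| =
  \sum_(i : 'I_m) \sum_(j : 'I_m) \sum_(c : 'I_m) t (i + j + c) * ((1 + (i == j) + (c == i)) * (1 + (c == j))).
Proof.
rewrite -sum1_card big_distrr /=.
rewrite (eq_bigr (fun x => \sum_i \sum_j \sum_c Fw i j c x)); last first.
  move=> x; rewrite in_set => /andP[xv _]; by rewrite Fw_sum // muln1.
rewrite exchange_big; apply: eq_bigr => i _.
rewrite exchange_big; apply: eq_bigr => j _.
rewrite exchange_big; apply: eq_bigr => c _.
rewrite -Fw_vv /t -vv_S0.
rewrite (eq_bigr (fun x => (x == vv i j c) * Fw i j c (vv i j c))); last first.
  move=> x; rewrite in_set => /andP[xv _]; exact: Fw_supp.
rewrite big_mkcond /=.
rewrite (eq_bigr (fun x => ((x \in S0) * Fw i j c (vv i j c)) * (x == vv i j c))).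
  by rewrite sum_pred1.
move=> x _; case: (x \in S0); case: (x == vv i j c); by rewrite ?mul0n ?mul1n ?muln0 ?muln1.
Qed.

Lemma n0 : 0 < n.
Proof. by move: hodd; case: (n). Qed.

Lemma cnt a k : coprime a n -> \sum_(i < m) t (a * i + k) + (m < n) * t (a * m + k) = 1.
Proof.
move=> ca.
have [En|En] : n = m \/ n = m.+1 by move: hmn hnm; clear; lia.
  rewrite En ltnn mul0n addn0; exact: cnt0 (esym En) n0 hs ca.
rewrite En ltnSn mul1n.
have := cnt0 k (esym En) n0 hs ca; rewrite big_ord_recr /=.
by [].
Qed.

Lemma cnt_f (f : nat -> nat) a k : coprime a n -> (forall x, f x = a * x + k) ->
  \sum_(i < m) t (f i) + (m < n) * t (f m) = 1.
Proof.
move=> ca hf; rewrite hf (eq_bigr (fun i : 'I_m => t (a * i + k))); first exact: cnt.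
by move=> i _; rewrite hf.
Qed.

Lemma sumK (A B : 'I_m -> nat) e K : (forall i, A i + e * B i = K) ->
  \sum_i A i + e * \sum_i B i = m * K.
Proof.
move=> H; rewrite big_distrr -big_split /= (eq_bigr (fun _ => K)).
  by rewrite sum_nat_const card_ord.
by move=> i _; rewrite H.
Qed.

Lemma inner_c (i j : 'I_m) :
  \sum_(c : 'I_m) t (i + j + c) * ((1 + (i == j) + (c == i)) * (1 + (c == j))) =
  (1 + (j == i)) * (\sum_(c : 'I_m) t (i + j + c) + t (i + j + j)) + t (i + j + i) * (1 + (i == j)).
Proof.
rewrite (eq_bigr (fun c : 'I_m => (1 + (j == i)) * t (i + j + c) + ((1 + (j == i)) * t (i + j + c)) * (c == j)
   + (t (i + j + c) * (1 + (c == j))) * (c == i))); last first.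
  move=> c _; rewrite (eq_sym i j); case: (j == i); case: (c == i); case: (c == j);
  move: (t (i + j + c)) => u; clear; lia.
rewrite !big_split /= -big_distrr /= !sum_pred1.
rewrite mulnDr; set X := \sum_(c < m) t (i + j + c); case: (j == i); case: (i == j); move: X (t (i + j + j)) (t (i + j + i)) => X u v; clear; lia.
Qed.

Lemma count_X : 6 * #|S0| =
  \sum_(i : 'I_m) \sum_(j : 'I_m) \sum_(c : 'I_m) t (i + j + c)
  + \sum_(i : 'I_m) \sum_(j : 'I_m) t (i + j + j)
  + \sum_(i : 'I_m) \sum_(c : 'I_m) t (i + i + c)
  + \sum_(i : 'I_m) \sum_(j : 'I_m) t (i + j + i)
  + 2 * \sum_(i : 'I_m) t (i + i + i).
Proof.
rewrite count6.
under eq_bigr => i _ do under eq_bigr => j _ do rewrite inner_c.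
have E : forall i : 'I_m, \sum_(j : 'I_m) ((1 + (j == i)) * (\sum_(c : 'I_m) t (i + j + c) + t (i + j + j)) + t (i + j + i) * (1 + (i == j)))
  = \sum_(j : 'I_m) \sum_(c : 'I_m) t (i + j + c) + \sum_(j : 'I_m) t (i + j + j)
    + \sum_(c : 'I_m) t (i + i + c) + \sum_(j : 'I_m) t (i + j + i) + t (i + i + i) * 2.
  move=> i.
  rewrite (eq_bigr (fun j : 'I_m => (\sum_(c : 'I_m) t (i + j + c)) + t (i + j + j)
     + ((\sum_(c : 'I_m) t (i + j + c) + t (i + j + j))) * (j == i)
     + t (i + j + i) + t (i + j + i) * (j == i))); last first.
    move=> j _; rewrite (eq_sym i j); case: (j == i);
    move: (\sum_(c : 'I_m) t (i + j + c)) (t (i + j + j)) (t (i + j + i)) => u v w; clear; lia.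
  rewrite !big_split /= !sum_pred1.
  set A := \sum_(j < m) \sum_(c < m) t (i + j + c).
  set B := \sum_(j < m) t (i + j + j).
  set C := \sum_(c < m) t (i + i + c).
  set D := \sum_(j < m) t (i + j + i).
  clear; lia.
rewrite (eq_bigr _ (fun i _ => E i)) !big_split /= -big_distrl /= mulnC.
by [].
Qed.

Lemma cop2 : coprime 2 n.
Proof. by rewrite coprime2n. Qed.

Lemma LB_vals :
  [/\ \sum_(i : 'I_m) \sum_(j : 'I_m) \sum_(c : 'I_m) t (i + j + c) + (m < n) * \sum_(i : 'I_m) \sum_(j : 'I_m) t (i + j + m) = m * (m * 1),
      \sum_(i : 'I_m) \sum_(j : 'I_m) t (i + j + m) + (m < n) * \sum_(i : 'I_m) t (i + m + m) = m * 1,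
      \sum_(i : 'I_m) t (i + m + m) + (m < n) * t (m + m + m) = 1,
      \sum_(i : 'I_m) \sum_(j : 'I_m) t (i + j + j) + (m < n) * \sum_(i : 'I_m) t (i + m + m) = m * 1 &
  [/\ \sum_(i : 'I_m) \sum_(c : 'I_m) t (i + i + c) + (m < n) * \sum_(i : 'I_m) t (i + i + m) = m * 1,
      \sum_(i : 'I_m) t (i + i + m) + (m < n) * t (m + m + m) = 1,
      \sum_(i : 'I_m) \sum_(j : 'I_m) t (i + j + i) + (m < n) * \sum_(i : 'I_m) t (i + m + i) = m * 1 &
      \sum_(i : 'I_m) t (i + m + i) + (m < n) * t (m + m + m) = 1]].
Proof.
split; last split.
- apply: sumK => i; apply: sumK => j.
  apply: (cnt_f (f := fun c => i + j + c) (a := 1) (k := i + j)) (coprime1n n) _ => x; lia.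
- apply: sumK => i.
  apply: (cnt_f (f := fun c => i + c + m) (a := 1) (k := i + m)) (coprime1n n) _ => x; lia.
- apply: (cnt_f (f := fun c => c + m + m) (a := 1) (k := m + m)) (coprime1n n) _ => x; lia.
- apply: sumK => i.
  apply: (cnt_f (f := fun c => i + c + c) (a := 2) (k := i)) cop2 _ => x; lia.
- apply: sumK => i.
  apply: (cnt_f (f := fun c => i + i + c) (a := 1) (k := i + i)) (coprime1n n) _ => x; lia.
- apply: (cnt_f (f := fun c => c + c + m) (a := 2) (k := m)) cop2 _ => x; lia.
- apply: sumK => i.
  apply: (cnt_f (f := fun c => i + c + i) (a := 1) (k := i + i)) (coprime1n n) _ => x; lia.
- apply: (cnt_f (f := fun c => c + m + c) (a := 2) (k := m)) cop2 _ => x; lia.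
Qed.

Lemma X4_cop3 : coprime 3 n -> \sum_(i : 'I_m) t (i + i + i) + (m < n) * t (m + m + m) = 1.
Proof.
move=> c3; apply: (cnt_f (f := fun c => c + c + c) (a := 3) (k := 0)) c3 _ => x; lia.
Qed.

Lemma t3_zero : 3 %| n -> s = 1 -> forall k, t (k + k + k) = 0.
Proof.
move=> dv s1 k; rewrite /t s1.
have := modn_dvdm (k + k + k) dv.
have -> : k + k + k = k * 3 by lia.
rewrite modnMl; case: eqP => // ->; by [].
Qed.

Lemma LB_m : n = m -> 6 * #|S0| = m * m + 3 * m + 2 * \sum_(i : 'I_m) t (i + i + i).
Proof.
move=> En; have e0 : (m < n) = false by rewrite En ltnn.
case: LB_vals; rewrite e0 !mul0n !addn0 => h0 _ _ h1 [h2 _ h4 _].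
rewrite count_X; move: h0 h1 h2 h4.
set A := \sum_(i < m) \sum_(j < m) \sum_(c < m) t (i + j + c).
set B := \sum_(i < m) \sum_(j < m) t (i + j + j).
set C := \sum_(i < m) \sum_(c < m) t (i + i + c).
set D := \sum_(i < m) \sum_(j < m) t (i + j + i).
clear; lia.
Qed.

Lemma LB_m1 : n = m.+1 -> t (m + m + m) = 0 ->
  6 * #|S0| + 2 = m * m + 2 * m + 2 * \sum_(i : 'I_m) t (i + i + i).
Proof.
move=> En tz; have e1 : (m < n) = true by rewrite En ltnSn.
case: LB_vals; rewrite e1 !mul1n tz addn0 => h0 h0' h0'' h1 [h2 h2' h4 h4'].
rewrite count_X; move: h0 h0' h0'' h1 h2 h2' h4 h4'.
set A := \sum_(i < m) \sum_(j < m) \sum_(c < m) t (i + j + c).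
set B := \sum_(i < m) \sum_(j < m) t (i + j + j).
set C := \sum_(i < m) \sum_(c < m) t (i + i + c).
set D := \sum_(i < m) \sum_(j < m) t (i + j + i).
set Y := \sum_(i < m) \sum_(j < m) t (i + j + m).
set Z := \sum_(i < m) t (i + m + m).
set Z2 := \sum_(i < m) t (i + i + m).
set Z3 := \sum_(i < m) t (i + m + i).
clear; nia.
Qed.

End Low.
Unset Implicit Arguments.

Lemma alpha_eq m (T : {set {ffun 'I_m -> 'I_4}}) : @SRindependent m 3 T ->
  (forall S, @SRindependent m 3 S -> #|S| <= #|T|) -> SRalpha m 3 = #|T|.
Proof.
move=> hT H; apply/eqP; rewrite eqn_leq; apply/andP; split.
  apply/bigmax_leqP => S hS; exact: H.
rewrite /SRalpha; exact: (leq_bigmax_cond (P := fun S => @SRindependent m 3 S) (F := fun S => #|S|) T hT).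
Qed.

Lemma cop3_mod m : ~~ (m %% 3 == 0) -> coprime 3 m.
Proof. by move=> h; rewrite prime_coprime //. Qed.

Lemma dvd3_mod m : m %% 3 == 0 -> 3 %| m.
Proof. by []. Qed.

Lemma odd_mod m : m %% 2 == 1 -> odd m.
Proof. by rewrite modn2 => /eqP h; move: h; case: (odd m). Qed.

Theorem proposition13 (m : nat) : 1 <= m ->
  [/\ (m %% 6 == 1) || (m %% 6 == 5) -> 6 * SRalpha m 3 = (m + 1) * (m + 2),
      m %% 6 == 3 -> 6 * SRalpha m 3 = m * (m + 3),
      (m %% 6 == 0) || (m %% 6 == 4) -> 6 * SRalpha m 3 = m * (m + 2)
    & m %% 6 == 2 -> 6 * SRalpha m 3 + 2 = m ^ 2 + 2 * m].
Proof.
move=> m1; split.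
- move=> hm.
  have hmn : m <= m by [].
  have hnm : m <= m.+1 by [].
  have ho : odd m by apply: odd_mod; move: hm; clear; lia.
  have hs : 0 < m by [].
  have c3 : coprime 3 m by apply: cop3_mod; move: hm; clear; lia.
  have h3 : coprime 3 m \/ (3 %| m /\ 0 = 1) by left.
  have L := LB_m hmn hnm ho hs h3 erefl.
  have X := X4_cop3 hmn hnm ho hs h3 c3; rewrite ltnn mul0n addn0 in X.
  rewrite X in L.
  rewrite (@alpha_eq m _ (S0_indep hmn ho h3)).
    rewrite L; clear; lia.
  move=> S hS; have := UB hS; move: L; clear; nia.
- move=> hm.
  have hmn : m <= m by [].
  have hnm : m <= m.+1 by [].
  have ho : odd m by apply: odd_mod; move: hm; clear; lia.
  have hs : 1 < m by move: hm; clear; lia.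
  have d3 : 3 %| m by apply: dvd3_mod; move: hm; clear; lia.
  have h3 : coprime 3 m \/ (3 %| m /\ 1 = 1) by right.
  have L := LB_m hmn hnm ho hs h3 erefl.
  rewrite big1 in L; last by move=> i _; apply: (t3_zero hmn hnm ho hs h3 d3 erefl).
  rewrite (@alpha_eq m _ (S0_indep hmn ho h3)).
    rewrite L; clear; lia.
  move=> S hS; have := UB hS; move: L; clear; nia.
- move=> hm.
  have hmn : m <= m.+1 by [].
  have hnm : m.+1 <= m.+1 by [].
  have ho : odd m.+1 by apply: odd_mod; move: hm; clear; lia.
  have hs : 0 < m.+1 by [].
  have c3 : coprime 3 m.+1 by apply: cop3_mod; move: hm; clear; lia.
  have h3 : coprime 3 m.+1 \/ (3 %| m.+1 /\ 0 = 1) by left.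
  have tz : t m.+1 0 (m + m + m) = 0.
    rewrite /t; apply/eqP; rewrite eqb0; apply/negP => /eqP h.
    have m4 : 4 <= m by move: hm m1; clear; lia.
    have E : m + m + m = 2 * m.+1 + (m - 2) by move: m4; clear; lia.
    move: h; rewrite E modnMDl modn_small; first by move: m4; clear; lia.
    by move: m4; clear; lia.
  have L := LB_m1 hmn hnm ho hs h3 erefl tz.
  have X := X4_cop3 hmn hnm ho hs h3 c3; rewrite ltnSn tz muln0 addn0 in X.
  rewrite X in L.
  have ev : ~~ odd m by rewrite -oddS.
  rewrite (@alpha_eq m _ (S0_indep hmn ho h3)).
    move: L; clear; lia.
  move=> S hS; have := UBeven hS ev; move: L; clear; nia.
- move=> hm.
  have hmn : m <= m.+1 by [].
  have hnm : m.+1 <= m.+1 by [].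
  have ho : odd m.+1 by apply: odd_mod; move: hm; clear; lia.
  have hs : 1 < m.+1 by move: hm m1; clear; lia.
  have d3 : 3 %| m.+1 by apply: dvd3_mod; move: hm; clear; lia.
  have h3 : coprime 3 m.+1 \/ (3 %| m.+1 /\ 1 = 1) by right.
  have tz := t3_zero hmn hnm ho hs h3 d3 erefl m.
  have L := LB_m1 hmn hnm ho hs h3 erefl tz.
  rewrite big1 in L; last by move=> i _; apply: (t3_zero hmn hnm ho hs h3 d3 erefl).
  have ev : ~~ odd m by rewrite -oddS.
  rewrite (@alpha_eq m _ (S0_indep hmn ho h3)).
    move: L; clear; rewrite expnS expn1; lia.
  move=> S hS; have := UBeven hS ev; move: L; clear; nia.
Qed.
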